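(* The super-differential of $\theta$ at the origin is $\partial^+\theta(0)=\overline{\{\nabla\theta(q^{-1/2},q^{1/2}):q\in(0,\infty)\}}+[0,\infty)^2$.
   Context: $\theta:[0,\infty)^2\to[0,\infty)$ is continuous, concave, 1-homogeneous, symmetric, $C^\infty$ on $(0,\infty)^2$, with $\theta(0,s)=\theta(s,0)=0$, $\theta(s,s)=s$, $\theta(s,t)>0$ for $s,t>0$, and nondecreasing in each argument; it is regarded as a concave function $\mathbb{R}^2\to\mathbb{R}\cup\{-\infty\}$ with $\theta(s,t)=-\infty$ if $\min\{s,t\}<0$. The super-differential is $\partial^+\theta(x)=\{r\in\mathbb{R}^2:\theta(y)\le\theta(x)+\langle r,y-x\rangle\ \forall y\in\mathbb{R}^2\}$ (i.e. $-\partial(-\theta)(x)$). The overline denotes closure in $\mathbb{R}^2$ and $+$ the Minkowski sum. *)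

(* Defs.v *)
From Stdlib Require Import Reals.
From Coquelicot Require Import Coquelicot.
Open Scope R_scope.

Definition quadrant (p : R * R) : Prop := 0 <= fst p /\ 0 <= snd p.

Definition theta_ext (theta : R -> R -> R) (p : R * R) : Rbar :=
  match Rlt_dec (fst p) 0, Rlt_dec (snd p) 0 with
  | right _, right _ => Finite (theta (fst p) (snd p))
  | _, _ => m_infty
  end.

Definition superdiff (theta : R -> R -> R) (x : R * R) (r : R * R) : Prop :=
  forall y : R * R,
    Rbar_le (theta_ext theta y)
      (Rbar_plus (theta_ext theta x)
         (Finite (fst r * (fst y - fst x) + snd r * (snd y - snd x)))).

Definition partial1 (f : R -> R -> R) : R -> R -> R :=
  fun s t => Derive (fun u => f u t) s.
Definition partial2 (f : R -> R -> R) : R -> R -> R :=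
  fun s t => Derive (fun u => f s u) t.

Fixpoint Ck_open_quadrant (k : nat) (f : R -> R -> R) : Prop :=
  match k with
  | O => forall s t, 0 < s -> 0 < t ->
           continuous (fun p : R * R => f (fst p) (snd p)) (s, t)
  | S k' => (forall s t, 0 < s -> 0 < t ->
               ex_derive (fun u => f u t) s /\ ex_derive (fun u => f s u) t)
            /\ Ck_open_quadrant k' f
            /\ Ck_open_quadrant k' (partial1 f)
            /\ Ck_open_quadrant k' (partial2 f)
  end.

Definition smooth_open_quadrant (f : R -> R -> R) : Prop :=
  forall k, Ck_open_quadrant k f.

Definition admissible_theta (theta : R -> R -> R) : Prop :=
  (forall p : R * R, quadrant p ->
     filterlim (fun q : R * R => theta (fst q) (snd q))
       (within quadrant (locally p)) (locally (theta (fst p) (snd p))))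
  /\ (forall s1 t1 s2 t2 l, 0 <= s1 -> 0 <= t1 -> 0 <= s2 -> 0 <= t2 ->
        0 <= l <= 1 ->
        l * theta s1 t1 + (1 - l) * theta s2 t2
          <= theta (l * s1 + (1 - l) * s2) (l * t1 + (1 - l) * t2))
  /\ (forall l s t, 0 <= l -> 0 <= s -> 0 <= t ->
        theta (l * s) (l * t) = l * theta s t)
  /\ (forall s t, 0 <= s -> 0 <= t -> theta s t = theta t s)
  /\ smooth_open_quadrant theta
  /\ (forall s, 0 <= s -> theta 0 s = 0 /\ theta s 0 = 0)
  /\ (forall s, 0 <= s -> theta s s = s)
  /\ (forall s t, 0 < s -> 0 < t -> 0 < theta s t)
  /\ (forall s s' t, 0 <= s -> s <= s' -> 0 <= t -> theta s t <= theta s' t)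
  /\ (forall s t t', 0 <= s -> 0 <= t -> t <= t' -> theta s t <= theta s t').

Definition grad_curve (theta : R -> R -> R) (q : R) : R * R :=
  (partial1 theta (/ sqrt q) (sqrt q), partial2 theta (/ sqrt q) (sqrt q)).

Definition grad_set (theta : R -> R -> R) (g : R * R) : Prop :=
  exists q, 0 < q /\ g = grad_curve theta q.

Definition closure2 (A : R * R -> Prop) (p : R * R) : Prop :=
  forall eps : posreal, exists a, A a /\ ball p eps a.

Definition plus_quadrant (A : R * R -> Prop) (r : R * R) : Prop :=
  exists a b, A a /\ quadrant b /\ r = (fst a + fst b, snd a + snd b).

(* Main.v *)
Require Import Defs.
From Stdlib Require Import Reals Lra Psatz Classical.
From Coquelicot Require Import Coquelicot.
Open Scope R_scope.

Lemma ballR x e y : ball x e y <-> Rabs (y - x) < e.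
Proof. reflexivity. Qed.

Lemma ball2 (p a : R * R) e : ball p e a <-> Rabs (fst a - fst p) < e /\ Rabs (snd a - snd p) < e.
Proof. destruct p, a. reflexivity. Qed.

Lemma superdiff_iff theta r : theta 0 0 = 0 ->
  (superdiff theta (0,0) r <-> forall s t, 0 <= s -> 0 <= t -> theta s t <= fst r * s + snd r * t).
Proof.
  intros H0. unfold superdiff. split.
  - intros H s t Hs Ht. specialize (H (s,t)).
    unfold theta_ext in H; simpl in H.
    destruct (Rlt_dec s 0); [lra|]. destruct (Rlt_dec t 0); [lra|].
    destruct (Rlt_dec 0 0); [lra|]. rewrite H0 in H. simpl in H. lra.
  - intros H [s t]. unfold theta_ext; simpl.
    destruct (Rlt_dec s 0); [simpl; auto|]. destruct (Rlt_dec t 0); [simpl; auto|].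
    destruct (Rlt_dec 0 0); [lra|]. rewrite H0. simpl.
    specialize (H s t ltac:(lra) ltac:(lra)). lra.
Qed.

Lemma cont10 (theta : R -> R -> R) :
  (forall p : R * R, quadrant p ->
     filterlim (fun q : R * R => theta (fst q) (snd q))
       (within quadrant (locally p)) (locally (theta (fst p) (snd p)))) ->
  theta 1 0 = 0 ->
  forall eps, 0 < eps -> exists del, 0 < del /\ forall x, 0 <= x < del -> theta 1 x < eps.
Proof.
  intros Hc H10 eps He.
  assert (Q : quadrant (1,0)) by (unfold quadrant; simpl; lra).
  specialize (Hc (1,0) Q _ (locally_ball _ (mkposreal eps He))).
  destruct Hc as [del Hdel].
  exists del. split; [apply cond_pos|].
  intros x Hx. specialize (Hdel (1,x)).
  simpl in Hdel. rewrite H10 in Hdel.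
  assert (B : ball (1,0) del (1,x)).
  { apply ball2; simpl. pose proof (cond_pos del). split; [replace (1-1) with 0 by ring; rewrite Rabs_R0; lra| rewrite Rminus_0_r, Rabs_pos_eq; lra]. }
  specialize (Hdel B ltac:(unfold quadrant; simpl; lra)).
  assert (Hr : Rabs (theta 1 x - 0) < eps) by exact Hdel. apply Rabs_def2 in Hr. lra. Qed.
Lemma tangent (h : R -> R) q x :
  (forall x y l, 0 <= x -> 0 <= y -> 0 <= l <= 1 ->
     l * h x + (1 - l) * h y <= h (l * x + (1 - l) * y)) ->
  0 < q -> ex_derive h q -> 0 <= x ->
  h x <= h q + Derive h q * (x - q).
Proof.
  intros Hc Hq Hd Hx.
  destruct (Req_dec x q) as [->|Hne]; [lra|].
  destruct (Rle_lt_dec (h x) (h q + Derive h q * (x - q))) as [|Hlt]; [auto|].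
  exfalso.
  set (d := h x - h q - Derive h q * (x - q)).
  assert (Hd0 : 0 < d) by (unfold d; lra).
  assert (Ha : 0 < Rabs (x - q)) by (apply Rabs_pos_lt; lra).
  pose proof (Derive_correct _ _ Hd) as HD.
  apply is_derive_Reals in HD.
  destruct (HD (d / (2 * Rabs (x - q)))) as [del Hdel].
  { apply Rdiv_lt_0_compat; lra. }
  set (l := Rmin (1/2) (del / (2 * Rabs (x - q)))).
  assert (Hl0 : 0 < l).
  { unfold l; apply Rmin_glb_lt; [lra|]. apply Rdiv_lt_0_compat; [apply cond_pos|lra]. }
  assert (Hl1 : l <= 1/2) by (unfold l; apply Rmin_l).
  assert (Hl2 : l * Rabs (x - q) <= del / 2).
  { assert (l <= del / (2 * Rabs (x - q))) by (unfold l; apply Rmin_r).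
    apply Rmult_le_compat_r with (r := Rabs (x - q)) in H; [|lra].
    replace (del / (2 * Rabs (x - q)) * Rabs (x - q)) with (del / 2) in H by (field; lra).
    lra. }
  specialize (Hdel (l * (x - q))).
  assert (Hne' : l * (x - q) <> 0).
  { apply Rmult_integral_contrapositive; split; lra. }
  assert (Habs : Rabs (l * (x - q)) < del).
  { rewrite Rabs_mult, (Rabs_pos_eq l) by lra. pose proof (cond_pos del). lra. }
  specialize (Hdel Hne' Habs).
  specialize (Hc x q l Hx (Rlt_le _ _ Hq) ltac:(lra)).
  replace (l * x + (1 - l) * q) with (q + l * (x - q)) in Hc by ring.
  set (D := h (q + l * (x - q)) - h q) in *.
  assert (HC : l * (h x - h q) <= D) by (unfold D; lra).
  replace ((h (q + l * (x - q)) - h q) / (l * (x - q))) with (D / (l * (x - q))) in Hdel by reflexivity.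
  apply Rabs_def2 in Hdel. destruct Hdel as [H1 H2].
  destruct (Rlt_dec 0 (x - q)) as [Hp|Hn].
  - rewrite Rabs_pos_eq in H1, H2 by lra.
    assert (D < l * (x - q) * (Derive h q + d / (2 * (x - q)))).
    { assert (D / (l * (x - q)) < Derive h q + d / (2 * (x - q))) by lra.
      assert (Hk : 0 < l * (x - q)) by nra.
      replace D with (D / (l * (x - q)) * (l * (x - q))) by (field; lra).
      rewrite (Rmult_comm (l * (x - q))). apply Rmult_lt_compat_r; lra. }
    replace (l * (x - q) * (Derive h q + d / (2 * (x - q)))) with
      (l * (Derive h q * (x - q)) + l * d / 2) in H by (field; lra).
    unfold d in *. nra.
  - rewrite Rabs_left in H1, H2 by lra.
    assert (D < l * (x - q) * (Derive h q - d / (2 * - (x - q)))).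
    { assert (Derive h q - d / (2 * - (x - q)) < D / (l * (x - q))) by lra.
      assert (Hk : 0 < - (l * (x - q))) by nra.
      replace D with (D / (l * (x - q)) * (l * (x - q))) by (field; lra).
      set (u := D / (l * (x - q))) in *. set (A := Derive h q - d / (2 * - (x - q))) in *.
      set (k := l * (x - q)) in *. nra. }
    replace (l * (x - q) * (Derive h q - d / (2 * - (x - q)))) with
      (l * (Derive h q * (x - q)) + l * d / 2) in H by (field; lra).
    unfold d in *. nra.
Qed.
Lemma loc_pos p (P : R -> Prop) : 0 < p -> (forall u, 0 < u -> P u) -> locally p P.
Proof.
  intros Hp HP. eapply filter_imp; [|apply (open_gt 0 p Hp)]. exact HP.
Qed.

Lemma grad_eq (theta : R -> R -> R) q :
  (forall l s t, 0 <= l -> 0 <= s -> 0 <= t -> theta (l * s) (l * t) = l * theta s t) ->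
  (forall x, 0 < x -> ex_derive (fun u => theta 1 u) x) ->
  0 < q ->
  grad_curve theta q = (theta 1 q - q * Derive (fun u => theta 1 u) q, Derive (fun u => theta 1 u) q).
Proof.
  intros Hom Hd Hq.
  set (h := fun u => theta 1 u).
  assert (Hs : 0 < sqrt q) by (apply sqrt_lt_R0; lra).
  assert (Hsq : sqrt q * sqrt q = q) by (apply sqrt_sqrt; lra).
  set (c := / sqrt q).
  assert (Hc : 0 < c) by (apply Rinv_0_lt_compat; lra).
  assert (Hsc : sqrt q / c = q) by (unfold c; field_simplify; lra).
  unfold grad_curve, partial1, partial2. fold c. f_equal.
  - rewrite (Derive_ext_loc _ (fun s => s * h (sqrt q / s))).
    2:{ apply loc_pos; auto. intros u Hu. unfold h.
        rewrite <- Hom by (try apply Rlt_le; try apply Rdiv_lt_0_compat; lra).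
        f_equal; field; lra. }
    apply is_derive_unique. auto_derive.
    + assert (E : sqrt q * / c = q) by exact Hsc. rewrite E.
      split; [apply Hd; lra|split; [lra|auto]].
    + assert (E : sqrt q * / c = q) by exact Hsc. rewrite E.
      change (Derive (fun x : R => h x)) with (Derive h).
      replace (c * (sqrt q * (- (1) * / (c * c)) * Derive h q)) with (- (sqrt q * / c) * Derive h q) by (field; lra).
      rewrite E. ring.
  - rewrite (Derive_ext_loc _ (fun u => c * h (u / c))).
    2:{ apply loc_pos; auto. intros u Hu. unfold h.
        rewrite <- Hom by (try apply Rlt_le; try apply Rdiv_lt_0_compat; lra).
        f_equal; field; lra. }
    apply is_derive_unique. auto_derive.
    + assert (E : sqrt q * / c = q) by exact Hsc. rewrite E. apply Hd; lra.
    + assert (E : sqrt q * / c = q) by exact Hsc. rewrite E.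
      change (Derive (fun x : R => h x)) with (Derive h). field; lra.
Qed.

Lemma g_cont (theta : R -> R -> R) q : smooth_open_quadrant theta -> 0 < q ->
  continuity_pt (fun x => Derive (fun u => theta 1 u) x) q.
Proof.
  intros Hsm Hq. apply continuity_pt_filterlim.
  destruct (Hsm 1%nat) as [_ [_ [_ H2]]]. simpl in H2.
  specialize (H2 1 q ltac:(lra) Hq).
  apply (continuous_comp_2 (fun _ : R => 1) (fun x : R => x) (partial2 theta) q).
  - apply continuous_const.
  - apply continuous_id.
  - exact H2.
Qed.

Theorem lemma4p6 (theta : R -> R -> R) :
  admissible_theta theta ->
  forall r : R * R,
    superdiff theta (0, 0) r <-> plus_quadrant (closure2 (grad_set theta)) r.
Proof.
  intros [Hcont [Hconc [Hom [Hsym [Hsm [Hbd [Hdiag [Hpos [Hmon1 Hmon2]]]]]]]]] r.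
  assert (H00 : theta 0 0 = 0) by (apply (Hbd 0); lra).
  assert (H10 : theta 1 0 = 0) by (apply (Hbd 1); lra).
  rewrite (superdiff_iff _ _ H00).
  set (h := fun u => theta 1 u).
  set (g := fun x => Derive h x).
  assert (Hder : forall x, 0 < x -> ex_derive h x).
  { intros x Hx. destruct (Hsm 1%nat) as [H1 _]. apply (H1 1 x); lra. }
  assert (Hch : forall x y l, 0 <= x -> 0 <= y -> 0 <= l <= 1 ->
     l * h x + (1 - l) * h y <= h (l * x + (1 - l) * y)).
  { intros x y l Hx Hy Hl. unfold h.
    pose proof (Hconc 1 x 1 y l ltac:(lra) Hx ltac:(lra) Hy Hl) as Hc.
    replace (l * 1 + (1 - l) * 1) with 1 in Hc by ring. exact Hc. }
  assert (Htan : forall q x, 0 < q -> 0 <= x -> h x <= h q + g q * (x - q)).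
  { intros q x Hq Hx. apply tangent; auto. }
  assert (Hh0 : h 0 = 0) by exact H10.
  assert (Hhm : forall x y, 0 <= x -> x <= y -> h x <= h y).
  { intros x y Hx Hxy. apply Hmon2; lra. }
  assert (Hhnn : forall x, 0 <= x -> 0 <= h x).
  { intros x Hx. rewrite <- Hh0. apply Hhm; lra. }
  assert (Hg0 : forall q, 0 < q -> 0 <= g q).
  { intros q Hq. pose proof (Htan q (q+1) Hq ltac:(lra)).
    pose proof (Hhm q (q+1) ltac:(lra) ltac:(lra)). nra. }
  assert (Hgm : forall p q, 0 < p -> p <= q -> g q <= g p).
  { intros p q Hp Hpq. pose proof (Htan p q Hp ltac:(lra)).
    pose proof (Htan q p ltac:(lra) ltac:(lra)).
    destruct (Req_dec p q) as [->|Hne]; [lra|].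
    assert (0 < q - p) by lra.
    assert (0 <= (g p - g q) * (q - p)) by nra.
    destruct (Rle_lt_dec (g q) (g p)); auto. nra. }
  assert (Hint : forall q, 0 < q -> 0 <= h q - q * g q).
  { intros q Hq. pose proof (Htan q 0 Hq ltac:(lra)). lra. }
  assert (Hst : forall s t, 0 < s -> 0 <= t -> theta s t = s * h (t / s)).
  { intros s t Hs Ht. unfold h. rewrite <- Hom by (try apply Rdiv_le_0_compat; lra).
    f_equal; field; lra. }
  assert (Hinv : forall x, 0 < x -> h x = x * h (/ x)).
  { intros x Hx. unfold h. assert (0 < / x) by (apply Rinv_0_lt_compat; lra).
    rewrite <- (Hsym (/ x) 1) by lra.
    rewrite <- Hom by lra. f_equal; field; lra. }
  assert (Hgrad : forall q, 0 < q -> grad_curve theta q = (h q - q * g q, g q)).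
  { intros q Hq. apply grad_eq; auto. }
  assert (Hkey : forall q s t, 0 < q -> 0 <= s -> 0 <= t ->
            theta s t <= (h q - q * g q) * s + g q * t).
  { intros q s t Hq Hs Ht. destruct (Req_dec s 0) as [->|Hs0].
    - rewrite (proj1 (Hbd t Ht)). pose proof (Hg0 q Hq). nra.
    - rewrite Hst by lra. pose proof (Htan q (t / s) Hq ltac:(apply Rdiv_le_0_compat; lra)).
      apply Rmult_le_compat_l with (r := s) in H; [|lra].
      replace (s * (h q + g q * (t / s - q))) with ((h q - q * g q) * s + g q * t) in H
        by (field; lra). exact H. }
  assert (Hc0 : forall eps, 0 < eps -> exists del, 0 < del /\ forall x, 0 <= x < del -> h x < eps)
    by exact (cont10 theta Hcont H10).
  destruct r as [r1 r2]. simpl. split.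
  - intros H.
    assert (Hr1 : 0 <= r1) by (pose proof (H 1 0 ltac:(lra) ltac:(lra)); lra).
    assert (Hr2 : 0 <= r2) by (pose proof (H 0 1 ltac:(lra) ltac:(lra)); rewrite (proj1 (Hbd 1 ltac:(lra))) in *; lra).
    assert (Hh : forall x, 0 <= x -> h x <= r1 + r2 * x).
    { intros x Hx. pose proof (H 1 x ltac:(lra) Hx). unfold h. lra. }
    destruct (Req_dec r2 0) as [Hr20|Hr2p].
    + subst r2.
      destruct (completeness (fun y => exists x, 0 <= x /\ y = h x)) as [Mh [HM1 HM2]].
      { exists r1. intros y [x [Hx ->]]. pose proof (Hh x Hx). lra. }
      { exists (h 0). exists 0. split; [lra|auto]. }
      assert (HMr : Mh <= r1). { apply HM2. intros y [x [Hx ->]]. pose proof (Hh x Hx). lra. }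
      assert (Hup : forall x, 0 <= x -> h x <= Mh). { intros x Hx. apply HM1. exists x; auto. }
      exists (Mh, 0), (r1 - Mh, 0). split; [|split; [unfold quadrant; simpl; lra| f_equal; simpl; ring]].
      intros eps. pose proof (cond_pos eps) as Heps.
      assert (Hx0 : exists x0, 0 <= x0 /\ Mh - eps/4 < h x0).
      { apply NNPP. intros Hn. assert (Mh <= Mh - eps/4); [|lra]. apply HM2; intros y [x [Hx ->]].
        destruct (Rle_lt_dec (h x) (Mh - eps/4)); auto. exfalso; apply Hn; exists x; auto. }
      destruct Hx0 as [x0 [Hx0 Hhx0]].
      set (q := 2 * (x0 + 1)).
      assert (Hq : 0 < q) by (unfold q; lra).
      exists (grad_curve theta q). split; [exists q; auto|].
      apply ball2. rewrite Hgrad by exact Hq. simpl.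
      pose proof (Htan q (q/2) Hq ltac:(lra)).
      pose proof (Hhm x0 (q/2) Hx0 ltac:(unfold q; lra)).
      pose proof (Hup q ltac:(lra)). pose proof (Hg0 q Hq).
      assert (g q * (q/2) < eps/4) by lra.
      assert (g q <= g q * (q/2)) by (unfold q in *; nra).
      split.
      * change (Rabs ((h q - q * g q) - Mh) < eps). apply Rabs_def1; lra.
      * change (Rabs (g q - 0) < eps). apply Rabs_def1; lra.
    + assert (Hr2p' : 0 < r2) by lra.
      destruct (classic (forall q, 0 < q -> g q <= r2)) as [Hb|Hnb].
      * destruct (completeness (fun y => exists q, 0 < q /\ y = g q)) as [Mg [HM1 HM2]].
        { exists r2. intros y [q [Hq ->]]. auto. }
        { exists (g 1). exists 1. split; [lra|auto]. }
        assert (HMr : Mg <= r2). { apply HM2. intros y [q [Hq ->]]. auto. }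
        assert (Hup : forall q, 0 < q -> g q <= Mg). { intros q Hq. apply HM1. exists q; auto. }
        exists (0, Mg), (r1, r2 - Mg). split; [|split; [unfold quadrant; simpl; lra| f_equal; simpl; ring]].
        intros eps. pose proof (cond_pos eps) as Heps.
        assert (Hq0 : exists q0, 0 < q0 /\ Mg - eps < g q0).
        { apply NNPP. intros Hn. assert (Mg <= Mg - eps); [|lra]. apply HM2; intros y [x [Hx ->]].
          destruct (Rle_lt_dec (g x) (Mg - eps)); auto. exfalso; apply Hn; exists x; auto. }
        destruct Hq0 as [q0 [Hq0 Hgq0]].
        destruct (Hc0 eps Heps) as [del [Hdel Hdelh]].
        set (q := Rmin q0 (del/2)).
        assert (Hq : 0 < q) by (unfold q; apply Rmin_glb_lt; lra).
        assert (Hqq0 : q <= q0) by (unfold q; apply Rmin_l).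
        assert (Hqd : q <= del/2) by (unfold q; apply Rmin_r).
        exists (grad_curve theta q). split; [exists q; auto|].
        apply ball2. rewrite Hgrad by exact Hq. simpl.
        pose proof (Hdelh q ltac:(lra)). pose proof (Hint q Hq). pose proof (Hg0 q Hq).
        pose proof (Hgm q q0 Hq Hqq0). pose proof (Hup q Hq).
        assert (0 <= q * g q) by nra.
        split.
        -- change (Rabs ((h q - q * g q) - 0) < eps). apply Rabs_def1; lra.
        -- change (Rabs (g q - Mg) < eps). apply Rabs_def1; lra.
      * apply not_all_ex_not in Hnb. destruct Hnb as [q0 Hq0].
        apply imply_to_and in Hq0. destruct Hq0 as [Hq0 Hgq0]. apply Rnot_le_lt in Hgq0.
        destruct (Hc0 r2 Hr2p') as [del [Hdel Hdelh]].
        set (q1 := q0 + 2 / del).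
        assert (H2d : 0 < 2 / del) by (apply Rdiv_lt_0_compat; lra).
        assert (Hq1 : q0 < q1) by (unfold q1; lra).
        assert (Hiq1 : / q1 < del).
        { assert (E : del * q1 = del * q0 + 2) by (unfold q1; field; lra).
          apply (Rmult_lt_reg_r q1); [lra|]. rewrite Rinv_l by lra. nra. }
        assert (Hiq1' : 0 < / q1) by (apply Rinv_0_lt_compat; lra).
        assert (Hgq1 : g q1 < r2).
        { pose proof (Hint q1 ltac:(lra)) as HI. rewrite Hinv in HI by lra.
          pose proof (Hdelh (/ q1) ltac:(lra)). nra. }
        destruct (Ranalysis5.IVT_interv (fun x => r2 - g x) q0 q1) as [z [Hz Hgz]].
        { intros a Ha. apply continuity_pt_minus.
          - apply continuity_pt_const. intros u v. reflexivity.
          - exact (g_cont theta a Hsm ltac:(lra)). }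
        { exact Hq1. }
        { lra. }
        { lra. }
        exists (grad_curve theta z), (r1 - (h z - z * r2), 0).
        split; [intros eps; exists (grad_curve theta z); split; [exists z; split; [lra|auto]| apply ball_center]|].
        pose proof (Hh z ltac:(lra)).
        split; [unfold quadrant; simpl; lra|].
        rewrite Hgrad by lra. simpl. assert (Ez : g z = r2) by lra. rewrite Ez. f_equal; ring.
  - intros [a [b [Ha [Hb Hr]]]]. injection Hr as -> ->.
    intros s t Hs Ht. destruct Hb as [Hb1 Hb2].
    cut (theta s t <= fst a * s + snd a * t); [intros; nra|].
    destruct (Rle_lt_dec (theta s t) (fst a * s + snd a * t)) as [|Hlt]; auto. exfalso.
    set (d := theta s t - (fst a * s + snd a * t)).
    assert (Hd : 0 < d / (s + t + 1)) by (apply Rdiv_lt_0_compat; unfold d; lra).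
    destruct (Ha (mkposreal _ Hd)) as [a' [[q [Hq ->]] Hball]].
    apply ball2 in Hball. rewrite Hgrad in Hball by exact Hq. simpl in Hball.
    set (e := d / (s + t + 1)) in *.
    destruct Hball as [B1 B2].
    assert (B1' : Rabs ((h q - q * g q) - fst a) < e) by exact B1.
    assert (B2' : Rabs (g q - snd a) < e) by exact B2.
    apply Rabs_def2 in B1'. apply Rabs_def2 in B2'.
    pose proof (Hkey q s t Hq Hs Ht).
    assert (E : e * (s + t + 1) = d) by (unfold e; field; lra).
    assert ((h q - q * g q) * s <= fst a * s + e * s) by nra.
    assert (g q * t <= snd a * t + e * t) by nra.
    unfold d in E. nra.
Qed.
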